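(* Let $w,n$ be positive integers with $w\le n$ such that $r:=\binom{n}{w}/\lfloor n/w\rfloor$ is an even integer. Let $a$ be the remainder of $n$ divided by $w$ and suppose $2a<w$. Suppose that there exists a $2$-good almost-regular edge-coloring of $K_n^w$. Then there exists a $\mathrm{TOC}_3(n,2w-1,w)$.
   Context: $\mathcal{H}_q(n,w)$ is the set of all words of length $n$ over $\mathbb{Z}_q$ with exactly $w$ nonzero entries, with the Hamming distance. An $(n,d,w)_q$-code is a nonempty subset of $\mathcal{H}_q(n,w)$ in which any two distinct words have Hamming distance at least $d$; $A_q(n,d,w)$ is the maximum size of such a code, and a code of this size is optimal. A $\mathrm{TOC}_q(n,d,w)$ is a partition of $\mathcal{H}_q(n,w)$ into optimal $(n,d,w)_q$-codes. $K_n^w$ is the complete $w$-uniform hypergraph on vertex set $[n]$. A sub-hypergraph with vertex set $[n]$ is almost-regular if the degrees of any two vertices differ by at most one. Suppose $g\mid r$ where $r=\binom{n}{w}/\lfloor n/w\rfloor$. An almost-regular edge-coloring $\{\mathcal{F}_{i,j}:1\le i\le r/g,\,1\le j\le g\}$ of $K_n^w$ is a partition of the edges of $K_n^w$ into classes $\mathcal{F}_{i,j}$, each an almost-regular sub-hypergraph (on vertex set $[n]$) with exactly $\lfloor n/w\rfloor$ edges. It is $g$-good if for each $i$ the union $\mathcal{A}_i=\bigcup_{j=1}^g\mathcal{F}_{i,j}$ is the block set of a packing $\mathrm{P}(2,w,n)$, i.e. every pair of elements of $[n]$ is contained in at most one edge of $\mathcal{A}_i$. *)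

(* Defs.v *)
From mathcomp Require Import all_boot.
Set Implicit Arguments. Unset Strict Implicit. Unset Printing Implicit Defensive.

(* Words of length n over Z_q: Z_q represented by 'I_q (the element 0 is
   the ordinal with value 0). *)
Definition word (q n : nat) := {ffun 'I_n -> 'I_q}.

Definition wt (q n : nat) (x : word q n) : nat :=
  #|[set i : 'I_n | nat_of_ord (x i) != 0]|.

Definition hdist (q n : nat) (x y : word q n) : nat :=
  #|[set i : 'I_n | x i != y i]|.

Definition Hqnw (q n w : nat) : {set word q n} := [set x | wt x == w].

Definition is_code (q n d w : nat) (C : {set word q n}) : bool :=
  [&& C != set0, C \subset Hqnw q n w &
   [forall x in C, forall y in C, (x != y) ==> (d <= hdist x y)]].

Definition Aq (q n d w : nat) : nat :=
  \max_(C : {set word q n} | is_code d w C) #|C|.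

Definition optimal_code (q n d w : nat) (C : {set word q n}) : bool :=
  is_code d w C && (#|C| == Aq q n d w).

Definition TOC (q n d w : nat) (P : {set {set word q n}}) : Prop :=
  partition P (Hqnw q n w) /\ forall C, C \in P -> optimal_code d w C.

Definition rr (n w : nat) : nat := 'C(n, w) %/ (n %/ w).

Definition hdeg (n : nat) (E : {set {set 'I_n}}) (v : 'I_n) : nat :=
  #|[set e in E | v \in e]|.

Definition almost_regular (n : nat) (E : {set {set 'I_n}}) : Prop :=
  forall u v : 'I_n, hdeg E u <= (hdeg E v).+1.

(* Almost-regular edge-coloring {F_{i,j} : i < r/g, j < g} of K_n^w
   (indices shifted to start at 0). *)
Definition almost_regular_coloring (n w g : nat)
  (F : 'I_(rr n w %/ g) -> 'I_g -> {set {set 'I_n}}) : Prop :=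
  (forall i j e, e \in F i j -> #|e| = w) /\
  (forall e : {set 'I_n}, #|e| = w ->
     exists! ij : 'I_(rr n w %/ g) * 'I_g, e \in F ij.1 ij.2) /\
  (forall i j, almost_regular (F i j) /\ #|F i j| = n %/ w).

Definition is_packing (n : nat) (A : {set {set 'I_n}}) : Prop :=
  forall x y : 'I_n, x != y ->
    forall e1 e2, e1 \in A -> e2 \in A ->
      x \in e1 -> y \in e1 -> x \in e2 -> y \in e2 -> e1 = e2.

Definition good_coloring (n w g : nat)
  (F : 'I_(rr n w %/ g) -> 'I_g -> {set {set 'I_n}}) : Prop :=
  almost_regular_coloring F /\
  forall i, is_packing (\bigcup_(j < g) F i j).

(* Main.v *)
Require Import Defs.
From mathcomp Require Import all_boot zify.
Set Implicit Arguments. Unset Strict Implicit. Unset Printing Implicit Defensive.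

Lemma card_sum (T : finType) (X : {set T}) (P : pred T) :
  #|[set x in X | P x]| = \sum_(x in X) (P x : nat).
Proof.
rewrite -sum1_card big_mkcond [RHS]big_mkcond /=; apply: eq_bigr => x _.
by rewrite !inE; case: (x \in X); case: (P x).
Qed.

Lemma card_sumT (T : finType) (P : pred T) :
  #|[set x | P x]| = \sum_x (P x : nat).
Proof.
rewrite -sum1_card big_mkcond /=; apply: eq_bigr => x _.
by rewrite !inE; case: (P x).
Qed.

Lemma dcount (A B : finType) (X : {set A}) (r : A -> B -> bool) :
  \sum_(a in X) #|[set b | r a b]| = \sum_b #|[set a in X | r a b]|.
Proof.
under eq_bigr do rewrite card_sumT.
rewrite exchange_big /=; apply: eq_bigr => b _.
by rewrite card_sum.
Qed.

Definition miss (T : finType) w (M : {set {set T}}) (S : {set T}) (c : T -> 'I_w)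
  (v : T) (a : 'I_w) : bool :=
  [forall e in M, (v \in e) ==> [forall y in e :&: S, c y != a]].

Definition proper_on (T : finType) w (M1 M2 : {set {set T}}) (S : {set T})
  (c : T -> 'I_w) := forall e, e \in M1 :|: M2 -> {in e :&: S &, injective c}.

Definition match_ (T : finType) (M : {set {set T}}) :=
  forall e f x, e \in M -> f \in M -> x \in e -> x \in f -> e = f.

Lemma miss_use (T : finType) w (M : {set {set T}}) (S : {set T}) (c : T -> 'I_w) v a e y :
  miss M S c v a -> e \in M -> v \in e -> y \in e -> y \in S -> c y != a.
Proof.
move=> /forallP /(_ e) /implyP H eM ve ye yS.
by move: (H eM) => /implyP /(_ ve) /forallP /(_ y) /implyP; apply; rewrite inE ye yS.
Qed.

Lemma miss_exists (T : finType) w (M : {set {set T}}) (S : {set T}) (c : T -> 'I_w) v :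
  0 < w -> match_ M -> (forall e, e \in M -> #|e| <= w) -> v \notin S ->
  exists a, miss M S c v a.
Proof.
move=> w0 mM sM vS.
case: (pickP (fun e => (e \in M) && (v \in e))) => [e1 /andP[e1M ve1] | none].
- have lt : #|c @: (e1 :&: S)| < w.
    apply: leq_ltn_trans (leq_imset_card _ _) _.
    apply: leq_trans (proper_card _) (sM e1 e1M).
    apply/properP; split; first exact: subsetIl.
    by exists v => //; rewrite inE (negbTE vS) andbF.
  case: (pickP (fun a => a \notin c @: (e1 :&: S))) => [a Ha | H].
    exists a; apply/forallP => e; apply/implyP => eM; apply/implyP => ve.
    rewrite (mM e e1 v eM e1M ve ve1).
    apply/forallP => y; apply/implyP => yin.
    by apply: contraNneq Ha => <-; apply: imset_f.
  have : c @: (e1 :&: S) = setT.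
    by apply/setP => a; rewrite inE; move: (H a) => /negbFE.
  by move=> E; move: lt; rewrite E cardsT card_ord ltnn.
- exists (Ordinal w0); apply/forallP => e; apply/implyP => eM; apply/implyP => ve.
  by have := none e; rewrite eM ve.
Qed.

Lemma extend (T : finType) w (M1 M2 : {set {set T}}) (S : {set T}) (c : T -> 'I_w) v a :
  proper_on M1 M2 S c -> miss M1 S c v a -> miss M2 S c v a ->
  proper_on M1 M2 (v |: S) (fun z => if z == v then a else c z).
Proof.
move=> Hc m1 m2 e eM x y; rewrite !inE => /andP[xe /orP xS] /andP[ye /orP yS].
case: (eqVneq x v) => [xv|xv]; case: (eqVneq y v) => [yv|yv] //=.
- by rewrite xv yv.
- subst x; have {}yS : y \in S by case: yS => // /eqP E; rewrite E eqxx in yv.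
  move=> Ha.
  move: eM; rewrite inE => /orP[eM|eM].
    by move: (miss_use m1 eM xe ye yS); rewrite Ha eqxx.
  by move: (miss_use m2 eM xe ye yS); rewrite Ha eqxx.
- subst y; have {}xS : x \in S by case: xS => // /eqP E; rewrite E eqxx in xv.
  move=> Ha.
  move: eM; rewrite inE => /orP[eM|eM].
    by move: (miss_use m1 eM ye xe xS); rewrite Ha eqxx.
  by move: (miss_use m2 eM ye xe xS); rewrite Ha eqxx.
- have xS' : x \in S by case: xS => // /eqP E; rewrite E eqxx in xv.
  have yS' : y \in S by case: yS => // /eqP E; rewrite E eqxx in yv.
  move=> H; apply: (Hc e eM) H; by rewrite inE ?xe ?ye ?xS' ?yS'.
Qed.

Definition share (T : finType) (M : {set {set T}}) (x y : T) :=
  [exists e in M, (x \in e) && (y \in e)].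

Lemma share_in (T : finType) (M : {set {set T}}) e x y :
  match_ M -> e \in M -> x \in e -> share M x y -> y \in e.
Proof.
by move=> mM eM xe /existsP[e' /and3P[e'M xe' ye']]; rewrite (mM e e' x).
Qed.

Lemma share_in' (T : finType) (M : {set {set T}}) e x y :
  match_ M -> e \in M -> y \in e -> share M x y -> x \in e.
Proof.
by move=> mM eM ye /existsP[e' /and3P[e'M xe' ye']]; rewrite (mM e e' y).
Qed.

Lemma share_of (T : finType) (M : {set {set T}}) e x y :
  e \in M -> x \in e -> y \in e -> share M x y.
Proof. by move=> eM xe ye; apply/existsP; exists e; rewrite eM xe ye. Qed.

Lemma swap_step (T : finType) w (M1 M2 : {set {set T}}) (S : {set T})
  (c : T -> 'I_w) v a b f1 u1 :
  match_ M1 -> match_ M2 -> proper_on M1 M2 S c ->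
  miss M1 S c v a -> miss M2 S c v b ->
  f1 \in M2 -> v \in f1 -> u1 \in f1 -> u1 \in S -> c u1 = a ->
  exists c2 : T -> 'I_w,
    [/\ proper_on M1 M2 S c2, miss M1 S c2 v a & miss M2 S c2 v a].
Proof.
move=> m1 m2 Hc ma mb f1M vf1 uf1 uS cu.
have ab : a != b by rewrite -cu (miss_use mb f1M vf1 uf1 uS).
have ba : b != a by rewrite eq_sym.
pose R : rel T := fun x y => [&& x \in S, y \in S &
   ((c x == a) && (c y == b) && share M1 x y) ||
   ((c x == b) && (c y == a) && share M2 x y)].
pose O := [set z | connect R u1 z].
pose sw z := if z == a then b else if z == b then a else z.
have swK : forall z, sw (sw z) = z.
  move=> z; rewrite /sw; case: (eqVneq z a) => [->|za].
    by rewrite (negbTE ba) eqxx.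
  case: (eqVneq z b) => [->|zb]; first by rewrite /= ?eqxx.
  by rewrite (negbTE za) (negbTE zb).
have swa : sw a = b by rewrite /sw eqxx.
have swb : sw b = a by rewrite /sw (negbTE ba) eqxx.
pose c2 z := if z \in O then sw (c z) else c z.
have uO : u1 \in O by rewrite inE connect0.
have HO2 : forall z, z \in O -> z = u1 \/ exists2 x, x \in O & R x z.
  move=> z; rewrite inE => /connectP[p pth ->].
  elim/last_ind: p pth => [|p y IH] /=; first by left.
  rewrite rcons_path => /andP[pth Rl]; right; exists (last u1 p).
    by rewrite inE; apply/connectP; exists p.
  by rewrite last_rcons.
have HO3 : forall x y, x \in O -> R x y -> y \in O.
  move=> x y; rewrite !inE => xO Rxy; apply: connect_trans xO _.
  exact: connect1.
have HO1 : forall z, z \in O -> z \in S /\ (c z = a \/ c z = b).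
  move=> z /HO2 [->|[x _ /and3P[_ zS /orP[/andP[/andP[_ /eqP ->] _]|/andP[/andP[_ /eqP ->] _]]]]].
  - by split => //; left.
  - by split => //; right.
  - by split => //; left.
have key : forall B x y, B \in M1 :|: M2 -> x \in B -> x \in S -> y \in B -> y \in S ->
    x \in O -> y \notin O -> sw (c x) = c y -> False.
  move=> B x y BM xB xS yB yS xO yO.
  have [_ [cxa|cxb]] := HO1 x xO.
  - rewrite cxa swa => cyb.
    move: BM; rewrite inE => /orP[BM|BM].
      move/negP: yO; apply; apply: (HO3 x) => //.
      by rewrite /R xS yS cxa cyb !eqxx (share_of BM xB yB).
    case: (HO2 x xO) => [xu|[x' x'O]].
      subst x; rewrite (m2 B f1 u1 BM f1M xB uf1) in yB.
      by move: (miss_use mb f1M vf1 yB yS); rewrite cyb eqxx.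
    rewrite /R cxa (negbTE ab) andbF /= => /and3P[x'S _ /andP[/andP[/eqP cx' _] sh]].
    have x'B : x' \in B by apply: share_in' m2 BM xB sh.
    have ex : x' = y.
      apply: (Hc B) => //; first by rewrite inE BM orbT.
      + by rewrite inE x'B x'S.
      + by rewrite inE yB yS.
      + by rewrite cx' cyb.
    by move/negP: yO; apply; rewrite -ex.
  - rewrite cxb swb => cya.
    move: BM; rewrite inE => /orP[BM|BM]; last first.
      move/negP: yO; apply; apply: (HO3 x) => //.
      by rewrite /R xS yS cxb cya !eqxx (share_of BM xB yB) orbT.
    case: (HO2 x xO) => [xu|[x' x'O]].
      by move: ab; rewrite -cxb xu cu eqxx.
    rewrite /R cxb (negbTE ba) andbF orbF => /and3P[x'S _ /andP[/andP[/eqP cx' _] sh]].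
    have x'B : x' \in B by apply: share_in' m1 BM xB sh.
    have ex : x' = y.
      apply: (Hc B) => //; first by rewrite inE BM.
      + by rewrite inE x'B x'S.
      + by rewrite inE yB yS.
      + by rewrite cx' cya.
    by move/negP: yO; apply; rewrite -ex.
exists c2; split.
- move=> B BM x y; rewrite !inE => /andP[xB xS] /andP[yB yS].
  rewrite /c2; case: (boolP (x \in O)) => xO; case: (boolP (y \in O)) => yO.
  + move=> E; have E' : c x = c y by rewrite -(swK (c x)) E swK.
    by apply: (Hc B BM) E'; rewrite inE ?xB ?yB ?xS ?yS.
  + by move=> E; case: (key B x y BM xB xS yB yS xO yO E).
  + by move=> E; case: (key B y x BM yB yS xB xS yO xO (esym E)).
  + by apply: (Hc B BM); rewrite inE ?xB ?yB ?xS ?yS.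
- apply/forallP => e; apply/implyP => eM; apply/implyP => ve.
  apply/forallP => y; apply/implyP; rewrite inE => /andP[ye yS].
  rewrite /c2; case: ifP => yO.
    have [_ [cya|cyb]] := HO1 y yO; first by rewrite cya swa.
    case: (HO2 y yO) => [yu|[x' x'O]].
      by move: ab; rewrite -cyb yu cu eqxx.
    rewrite /R cyb (negbTE ba) andbF orbF => /and3P[x'S _ /andP[/andP[/eqP cx' _] sh]].
    have x'e : x' \in e by apply: share_in' m1 eM ye sh.
    by move: (miss_use ma eM ve x'e x'S); rewrite cx' eqxx.
  exact: (miss_use ma eM ve ye yS).
- apply/forallP => e; apply/implyP => eM; apply/implyP => ve.
  rewrite (m2 e f1 v eM f1M ve vf1).
  apply/forallP => y; apply/implyP; rewrite inE => /andP[ye yS].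
  rewrite /c2; case: ifP => yO.
    have [_ [cya|cyb]] := HO1 y yO; first by rewrite cya swa.
    by move: (miss_use mb f1M vf1 ye yS); rewrite cyb eqxx.
  apply/negP => /eqP cya.
  have eu : y = u1.
    apply: (Hc f1) => //; first by rewrite inE f1M orbT.
    + by rewrite inE ye yS.
    + by rewrite inE uf1 uS.
    + by rewrite cya cu.
  by move: yO; rewrite eu uO.
Qed.

Lemma konig (T : finType) w (M1 M2 : {set {set T}}) :
  0 < w -> match_ M1 -> match_ M2 ->
  (forall e, e \in M1 -> #|e| <= w) -> (forall e, e \in M2 -> #|e| <= w) ->
  exists c : T -> 'I_w, forall e, e \in M1 :|: M2 -> {in e &, injective c}.
Proof.
move=> w0 m1 m2 s1 s2.
suff H : forall m (S : {set T}), #|S| = m -> exists c : T -> 'I_w, proper_on M1 M2 S c.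
  have [c Hc] := H #|[set: T]| [set: T] erefl.
  exists c; move=> e eM x y xe ye.
  by move=> E; apply: (Hc e eM) E; rewrite setIT.
elim=> [|m IH] S cS.
  exists (fun _ => Ordinal w0); move=> e eM x y; rewrite inE.
  by move/eqP: cS; rewrite cards_eq0 => /eqP ->; rewrite inE andbF.
have [v vS] : exists v, v \in S.
  by apply/set0Pn; rewrite -card_gt0 cS.
have cS' : #|S :\ v| = m by rewrite (cardsD1 v S) vS in cS; case: cS.
have vS' : v \notin S :\ v by rewrite !inE eqxx.
have ES : S = v |: (S :\ v) by rewrite setD1K.
have [c Hc] := IH _ cS'.
have [a ma] := miss_exists c w0 m1 s1 vS'.
have [b mb] := miss_exists c w0 m2 s2 vS'.
rewrite ES.
case: (boolP (miss M2 (S :\ v) c v a)) => ma2.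
  by exists (fun z => if z == v then a else c z); apply: extend.
move/forallPn: ma2 => [f1]; rewrite negb_imply => /andP[f1M].
rewrite negb_imply => /andP[vf1] /forallPn[u1]; rewrite negb_imply negbK.
move=> /andP[uin /eqP cu]; move: uin; rewrite inE => /andP[uf1 uS].
have [c2 [H1 H2 H3]] := swap_step m1 m2 Hc ma mb f1M vf1 uf1 uS cu.
by exists (fun z => if z == v then a else c2 z); apply: extend.
Qed.

Lemma deg_match n w (E : {set {set 'I_n}}) :
  (forall e, e \in E -> #|e| = w) -> almost_regular E -> #|E| = n %/ w -> match_ E.
Proof.
move=> sE ar cE e f x eE fE xe xf.
case: (eqVneq e f) => // nef; exfalso.
have h2 : 2 <= hdeg E x.
  rewrite /hdeg; have := cards2 e f; rewrite nef => <-; apply: subset_leq_card.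
  by apply/subsetP => g; rewrite !inE => /orP[/eqP->|/eqP->]; rewrite ?eE ?fE ?xe ?xf.
have hs : \sum_(u : 'I_n) hdeg E u = \sum_(e in E) #|e|.
  rewrite /hdeg -(dcount E (fun e u => u \in e)); apply: eq_bigr => g _.
  by apply: eq_card => u; rewrite inE.
have hw : \sum_(e in E) #|e| = #|E| * w.
  by rewrite -sum_nat_const; apply: eq_bigr => g /sE.
have hle : n + 1 <= \sum_(u : 'I_n) hdeg E u.
  have -> : n + 1 = \sum_(u : 'I_n) (1 + (u == x)).
    rewrite big_split /= sum1_card card_ord; congr (_ + _).
    rewrite -card_sumT; apply/eqP; rewrite -(cards1 x); apply/eqP.
    by apply: eq_card => u; rewrite !inE.
  apply: leq_sum => u _; case: (eqVneq u x) => [->|_] //=.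
  by rewrite addn0; have := ar x u; move: h2; clear; lia.
have : n %/ w * w <= n := leq_trunc_div n w.
by move: hle; rewrite hs hw cE; clear; lia.
Qed.

Definition supp n (x : word 3 n) := [set v | nat_of_ord (x v) != 0].

Lemma code_bound n w (C : {set word 3 n}) :
  0 < w -> is_code (2 * w - 1) w C -> #|C| * w <= 2 * n.
Proof.
move=> w0 /and3P[_ /subsetP CH /forallP Cd].
have wC : forall x, x \in C -> #|supp x| = w.
  by move=> x /CH; rewrite inE => /eqP.
have -> : #|C| * w = \sum_(x in C) #|[set i | nat_of_ord (x i) != 0]|.
  by rewrite -sum_nat_const; apply: eq_bigr => x /wC.
rewrite dcount.
have -> : 2 * n = \sum_(i : 'I_n) 2 by rewrite sum_nat_const card_ord mulnC.
apply: leq_sum => i _.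
set Y := [set x in C | _].
have inj : {in Y &, injective (fun x : word 3 n => x i)}.
  move=> x y; rewrite !inE => /andP[xC xi] /andP[yC yi] exy.
  apply/eqP; apply: contraTT isT => nxy.
  have := Cd x; rewrite xC /= => /forallP /(_ y); rewrite yC nxy /= => dd.
  have : hdist x y <= 2 * w - 2.
    rewrite /hdist.
    have sub : [set j | x j != y j] \subset (supp x :|: supp y) :\ i.
      apply/subsetP => j; rewrite !inE => nj.
      case: (eqVneq j i) => [eji|] /=; first by rewrite eji exy eqxx in nj.
      move=> _; apply: contraNT nj; rewrite negb_or !negbK => /andP[/eqP h1 /eqP h2].
      by apply/eqP/val_inj; rewrite /= h1 h2.
    apply: leq_trans (subset_leq_card sub) _.
    have iU : i \in supp x :|: supp y by rewrite !inE xi.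
    have iI : i \in supp x :&: supp y by rewrite !inE xi yi.
    have := cardsD1 i (supp x :|: supp y); rewrite iU.
    have := cardsUI (supp x) (supp y); rewrite (wC x xC) (wC y yC).
    have := cardsD1 i (supp x :&: supp y); rewrite iI.
    by clear; lia.
  by move: dd; clear -w0; lia.
rewrite -(card_in_imset inj).
have sub : [set (fun x : word 3 n => x i) x | x in Y] \subset [set z : 'I_3 | nat_of_ord z != 0].
  by apply/subsetP => z /imsetP[x]; rewrite !inE => /andP[_ xi] ->.
apply: leq_trans (subset_leq_card sub) _.
by rewrite card_sumT big_ord_recr /= big_ord_recr /= big_ord_recr /= big_ord0.
Qed.

Definition o0 : 'I_3 := @Ordinal 3 0 isT.
Definition o1 : 'I_3 := @Ordinal 3 1 isT.
Definition o2 : 'I_3 := @Ordinal 3 2 isT.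
Definition j0 : 'I_2 := @Ordinal 2 0 isT.
Definition j1 : 'I_2 := @Ordinal 2 1 isT.

Definition mkw n w (c : 'I_n -> 'I_w) (t : {ffun 'I_w -> bool}) (b : bool)
  (e : {set 'I_n}) : word 3 n :=
  [ffun v => if v \in e then (if t (c v) (+) b then o1 else o2) else o0].

Lemma supp_mkw n w (c : 'I_n -> 'I_w) t b e : supp (mkw c t b e) = e.
Proof.
by apply/setP => v; rewrite !inE ffunE; case: (v \in e); case: (t (c v) (+) b).
Qed.

Lemma wt_mkw n w (c : 'I_n -> 'I_w) t b e : wt (mkw c t b e) = #|e|.
Proof. by have := supp_mkw c t b e; rewrite /supp /wt => ->. Qed.

Lemma mkw_inj n w (c : 'I_n -> 'I_w) t b : injective (mkw c t b).
Proof. by move=> e f /(congr1 (@supp n)); rewrite !supp_mkw. Qed.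

Lemma ord2_cases (j : 'I_2) : j = j0 \/ j = j1.
Proof. by case: j => [[|[|//]]] p; [left|right]; apply/val_inj. Qed.

Lemma ord3_nz (z : 'I_3) : nat_of_ord z != 0 -> (if z == o1 then o1 else o2) = z.
Proof. by case: z => [[|[|[|//]]]] p //= _; apply/val_inj. Qed.

Theorem theorem3p3 (n w : nat) :
  0 < w -> w <= n ->
  (n %/ w) %| 'C(n, w) -> ~~ odd (rr n w) ->
  (n %% w).*2 < w ->
  (exists F : 'I_(rr n w %/ 2) -> 'I_2 -> {set {set 'I_n}}, good_coloring F) ->
  exists P : {set {set word 3 n}}, TOC (2 * w - 1) w P.
Proof.
move=> w0 wn _ _ ha [F [[H1 [H2 H3]] H4]].
pose k := n %/ w.
have k0 : 0 < k by rewrite divn_gt0.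
have mF : forall i j, match_ (F i j).
  by move=> i j; have [ar cF] := H3 i j; apply: deg_match (H1 i j) ar cF.
have Huq : forall i j i' j' e, e \in F i j -> e \in F i' j' -> i = i' /\ j = j'.
  move=> i j i' j' e eF eF'.
  have [ij [_ U]] := H2 e (H1 _ _ _ eF).
  have E1 := U (i, j) eF. have E2 := U (i', j') eF'.
  by move: (etrans (esym E1) E2) => [-> ->].
have Hpack : forall i j j' e f, e \in F i j -> f \in F i j' -> e != f -> #|e :&: f| <= 1.
  move=> i j j' e f eF fF nef; apply/card_le1_eqP => x y; rewrite !inE => /andP[xe xf] /andP[ye yf].
  apply/eqP; apply: contraNT nef => nxy; apply/eqP.
  apply: (H4 i y x nxy e f) => //; apply/bigcupP; by [exists j | exists j'].
have Hk : forall i, exists c : 'I_n -> 'I_w,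
    forall e, e \in F i j0 :|: F i j1 -> {in e &, injective c}.
  move=> i; apply: konig w0 (mF i j0) (mF i j1) _ _ => e /(H1 _ _ _) ->; exact: leqnn.
have [cc Hcc] := fin_all_exists Hk.
have Hcc' : forall i j e, e \in F i j -> {in e &, injective (cc i)}.
  move=> i j e eF; apply: Hcc; rewrite inE.
  by case: (ord2_cases j) eF => -> ->; rewrite ?orbT.
pose C i t := [set mkw (cc i) t false e | e in F i j0] :|: [set mkw (cc i) t true e | e in F i j1].
have memC : forall i t x, x \in C i t ->
    exists j, supp x \in F i j /\ x = mkw (cc i) t (j == j1) (supp x).
  move=> i t x; rewrite inE => /orP[] /imsetP[e eF ->].
    by exists j0; rewrite supp_mkw.
  by exists j1; rewrite supp_mkw eqxx.
have inC : forall i t j e, e \in F i j -> mkw (cc i) t (j == j1) e \in C i t.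
  move=> i t j e; case: (ord2_cases j) => -> eF; rewrite inE.
    by apply/orP; left; apply: imset_f.
  by apply/orP; right; rewrite eqxx; apply: imset_f.
have CH : forall i t x, x \in C i t -> x \in Hqnw 3 n w.
  move=> i t x /memC[j [sF ->]]; by rewrite inE wt_mkw (H1 _ _ _ sF).
have Cne : forall i t, C i t != set0.
  move=> i t; have [ar cF] := H3 i j0.
  have : 0 < #|F i j0| by rewrite cF.
  rewrite card_gt0 => /set0Pn[e eF]; apply/set0Pn.
  by exists (mkw (cc i) t false e); rewrite inE; apply/orP; left; apply: imset_f.
have surj : forall i j e, e \in F i j -> forall a, exists2 v, v \in e & cc i v = a.
  move=> i j e eF a.
  have : cc i @: e = setT.
    apply/eqP; rewrite eqEcard subsetT cardsT card_ord (card_in_imset (Hcc' _ _ _ eF)).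
    by rewrite /= (H1 _ _ _ eF).
  by move=> /setP /(_ a); rewrite inE => /imsetP[v ve ->]; exists v.
have Cuniq : forall i t i' t' x, x \in C i t -> x \in C i' t' -> i = i' /\ t = t'.
  move=> i t i' t' x /memC[j [sF E]] /memC[j' [sF' E']].
  have [ei ej] := Huq _ _ _ _ _ sF sF'; subst i' j'; split => //.
  apply/ffunP => a; have [v vs cv] := surj _ _ _ sF a.
  have := congr1 (fun y : word 3 n => y v) (etrans (esym E) E').
  rewrite !ffunE vs cv.
  by case: (t a); case: (t' a); case: (j == j1).
pose I := ('I_(rr n w %/ 2) * {ffun 'I_w -> bool})%type.
pose B := fun p : I => C p.1 p.2.
have disj : {in [set: I] &, forall p q, q != p -> [disjoint B p & B q]}.
  move=> [i t] [i' t'] _ _ ne; rewrite -setI_eq0; apply/eqP/setP => x.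
  rewrite in_setI in_set0; apply/negP => /andP[x1 x2].
  have [ei et] := Cuniq _ _ _ _ _ x1 x2; rewrite /= in ei et; subst i' t'.
  by rewrite eqxx in ne.
have nz : forall p, p \in [set: I] -> B p != set0.
  by move=> [i t] _; apply: Cne.
have [Hpart _] := indexed_partition disj nz.
have cov : cover [set B p | p in [set: I]] = Hqnw 3 n w.
  rewrite /cover; apply/setP => x; apply/bigcupP/idP.
    by move=> [X /imsetP[[i t] _ ->] xC]; apply: (CH i t).
  rewrite inE => /eqP cx.
  have [[i j] [eF _]] := H2 (supp x) cx.
  rewrite /= in eF.
  pose t := [ffun a => if [pick v in supp x | cc i v == a] is Some v
                        then (x v == o1) (+) (j == j1) else false].
  exists (C i t); first by apply/imsetP; exists (i, t); rewrite ?inE.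
  have -> : x = mkw (cc i) t (j == j1) (supp x); last exact: inC.
  apply/ffunP => v; rewrite ffunE; case: (boolP (v \in supp x)) => vs.
    rewrite ffunE; case: pickP => [v' /andP[v's /eqP cv]|none]; last first.
      by have := none v; rewrite vs eqxx.
    have ev : v' = v := Hcc' i j _ eF v' v v's vs cv.
    rewrite ev addbK; move: vs; rewrite inE => vs; by rewrite ord3_nz.
  by move: vs; rewrite inE negbK => /eqP h; apply/val_inj.
exists [set B p | p in [set: I]]; split; first by rewrite -cov.
move=> X /imsetP[[i t] _ ->]; rewrite /B /=.
have cardC : #|C i t| = 2 * k.
  rewrite /C cardsU.
  have -> : [set mkw (cc i) t false e | e in F i j0] :&:
            [set mkw (cc i) t true e | e in F i j1] = set0.
    apply/setP => x; rewrite !inE; apply/negP => /andP[/imsetP[e eF ->] /imsetP[f fF E]].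
    have ef : e = f by move: (congr1 (@supp n) E); rewrite !supp_mkw.
    subst f; have [_ ej] := Huq _ _ _ _ _ eF fF.
    by move: ej => /(congr1 val).
  rewrite !card_imset; try exact: mkw_inj.
  have [_ c0] := H3 i j0; have [_ c1] := H3 i j1.
  by rewrite c0 c1 cards0 subn0 addnn -muln2 mulnC.
have isc : is_code (2 * w - 1) w (C i t).
  apply/and3P; split; first exact: Cne.
    by apply/subsetP => x; apply: CH.
  apply/forallP => x; apply/implyP => xC; apply/forallP => y; apply/implyP => yC.
  apply/implyP => nxy.
  have [j [sF Ex]] := memC _ _ _ xC; have [j' [sF' Ey]] := memC _ _ _ yC.
  move: (supp x) sF Ex => e sF Ex; move: (supp y) sF' Ey => f sF' Ey.
  subst x y.
  have nef : e != f.
    apply: contraNneq nxy => ef; subst f.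
    by have [_ ->] := Huq _ _ _ _ _ sF sF'.
  have sub : e :|: f \subset [set v | mkw (cc i) t (j == j1) e v != mkw (cc i) t (j' == j1) f v].
    apply/subsetP => v; rewrite !inE !ffunE => vef.
    have bb : v \in e -> v \in f -> (j == j1) != (j' == j1).
      move=> ve vf; have jj : j != j'.
        apply: contraNneq nef => ejj; subst j'; apply/eqP.
        exact: (mF i j e f v sF sF' ve vf).
      by move: jj; case: (ord2_cases j) => ->; case: (ord2_cases j') => ->.
    move: vef bb; case: (v \in e); case: (v \in f) => //= _.
      by case: (t (cc i v)); case: (j == j1); case: (j' == j1); move=> /(_ isT isT).
    - by move=> _; case: (t (cc i v) (+) (j == j1)).
    - by move=> _; case: (t (cc i v) (+) (j' == j1)).
  have := subset_leq_card sub; rewrite -/(hdist _ _).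
  have := cardsUI e f; rewrite (H1 _ _ _ sF) (H1 _ _ _ sF').
  have := Hpack i j j' e f sF sF' nef.
  move: (hdist _ _) #|e :|: f| #|e :&: f| => h u a; lia.
have AqE : Aq 3 n (2 * w - 1) w = 2 * k.
  apply/eqP; rewrite eqn_leq; apply/andP; split.
    apply/bigmax_leqP => D Dc; have := code_bound w0 Dc.
    have := divn_eq n w; rewrite -/k; move: ha; rewrite -muln2.
    by clear; nia.
  by rewrite -cardC; apply: (leq_bigmax_cond (C i t)).
by rewrite /optimal_code isc cardC AqE eqxx.
Qed.
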